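(* For every integer $d \geq 2$ and all integers $s_1, \ldots, s_k \geq 1$, $$\frac{s_1}{s_1+\ldots+s_k}\mathsf {Brac}_{d,s_1}+\ldots+\frac{s_k}{s_1+\ldots+s_k}\mathsf {Brac}_{d,s_k}\subseteq \mathsf {Brac}_{d,s_1+\ldots+s_k}.$$ In particular, for all $s \geq 1$, $\mathsf {Brac}_{d,1} =\mathsf {Brac}_{d} \subseteq \mathsf {Brac}_{d,s}$.
   Context: $\Delta_d=\{\alpha\in\mathbb R^d:\alpha_i\ge0,\ \sum_i\alpha_i=1\}$; pairs $(\alpha,\beta)\in\Delta_d^2$ are added and scaled componentwise. $\mathsf{Brac}_d=\{(\alpha,\beta)\in\Delta_d^2:\ \forall i,\ \sqrt{\alpha_i\beta_i}\le\sum_{j\ne i}\sqrt{\alpha_j\beta_j}\}$. For $s\ge1$, $\mathsf{Brac}_{d,s}$ is the set of $(\alpha,\beta)\in\Delta_d^2$ for which there exist $A_1,\dots,A_d,B_1,\dots,B_d\in M_s(\mathbb C)$ with $\sum_i A_iA_i^*=\sum_iB_iB_i^*=I_s$, $\sum_iA_iB_i^*=0$, and $\tfrac1s\|A_i\|_F^2=\alpha_i$, $\tfrac1s\|B_i\|_F^2=\beta_i$ for all $i$, where $\|X\|_F=\operatorname{Tr}(XX^* )^{1/2}$. *)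

(* Defs.v *)
From HB Require Import structures.
From mathcomp Require Import all_boot all_order all_algebra.
From mathcomp Require Import reals.
From mathcomp Require Import complex.
Set Implicit Arguments. Unset Strict Implicit. Unset Printing Implicit Defensive.
Import Order.TTheory GRing.Theory Num.Theory.
Local Open Scope ring_scope.
Local Open Scope complex_scope.

Definition ctr (R : realType) (m n : nat) (X : 'M[R[i]]_(m, n)) : 'M[R[i]]_(n, m) :=
  (map_mx conjc X)^T.

Definition simplex (R : realType) (d : nat) (a : 'I_d -> R) : Prop :=
  (forall i, 0 <= a i) /\ \sum_(i < d) a i = 1.

Definition Brac (R : realType) (d : nat) (a b : 'I_d -> R) : Prop :=
  simplex a /\ simplex b /\
  forall i : 'I_d,
    Num.sqrt (a i * b i) <= \sum_(j < d | j != i) Num.sqrt (a j * b j).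

(* Brac_{d,s} ; the squared Frobenius norm ||X||_F^2 = Tr(X X^* ) *)
Definition Brac_s (R : realType) (d s : nat) (a b : 'I_d -> R) : Prop :=
  simplex a /\ simplex b /\
  exists A B : 'I_d -> 'M[R[i]]_s,
    \sum_(i < d) A i *m ctr (A i) = 1%:M /\
    \sum_(i < d) B i *m ctr (B i) = 1%:M /\
    \sum_(i < d) A i *m ctr (B i) = 0 /\
    (forall i, (s%:R)^-1 * \tr (A i *m ctr (A i)) = (a i)%:C) /\
    (forall i, (s%:R)^-1 * \tr (B i *m ctr (B i)) = (b i)%:C).

(* Main.v *)
Require Import Defs.
From HB Require Import structures.
From mathcomp Require Import all_boot all_order all_algebra.
From mathcomp Require Import reals.
From mathcomp Require Import complex.
From mathcomp Require Import ring lra zify.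
From Stdlib Require Import FunctionalExtensionality.
Import Order.TTheory GRing.Theory Num.Theory.
Local Open Scope ring_scope.
Set Implicit Arguments. Unset Strict Implicit. Unset Printing Implicit Defensive.
Section S.
Variable R : realType.
Local Open Scope complex_scope.

Lemma Brac_s_ext d s (a a' b b' : 'I_d -> R) :
  a =1 a' -> b =1 b' -> Brac_s s a b -> Brac_s s a' b'.
Proof.
by move=> /functional_extensionality <- /functional_extensionality <-.
Qed.

Lemma simplex_comb d (a1 a2 : 'I_d -> R) t1 t2 :
  simplex a1 -> simplex a2 -> 0 <= t1 -> 0 <= t2 -> t1 + t2 = 1 ->
  simplex (fun j => t1 * a1 j + t2 * a2 j).
Proof.
move=> [p1 s1] [p2 s2] h1 h2 ht; split.
  by move=> i; apply: addr_ge0; apply: mulr_ge0.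
by rewrite big_split /= -!mulr_sumr s1 s2 !mulr1.
Qed.

Lemma ctr_block m1 m2 (X : 'M[R[i]]_m1) (Y : 'M[R[i]]_m2) :
  ctr (block_mx X 0 0 Y) = block_mx (ctr X) 0 0 (ctr Y).
Proof.
by rewrite /ctr map_block_mx tr_block_mx !map_mx0 !trmx0.
Qed.

Lemma sum_block d m1 m2 (F : 'I_d -> 'M[R[i]]_m1) (G : 'I_d -> 'M[R[i]]_m2) :
  \sum_(i < d) block_mx (F i) 0 0 (G i) = block_mx (\sum_i F i) 0 0 (\sum_i G i).
Proof.
elim/big_rec3: _ => [|i x y z _ ->]; first by rewrite block_mx0.
by rewrite add_block_mx !addr0.
Qed.

Lemma mul_block m1 m2 (X X' : 'M[R[i]]_m1) (Y Y' : 'M[R[i]]_m2) :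
  block_mx X 0 0 Y *m block_mx X' 0 0 Y' = block_mx (X *m X') 0 0 (Y *m Y').
Proof. by rewrite mulmx_block !mulmx0 !mul0mx !addr0 !add0r. Qed.

Lemma two_block d s1 s2 (a1 b1 a2 b2 : 'I_d -> R) :
  (0 < s1)%N -> (0 < s2)%N -> Brac_s s1 a1 b1 -> Brac_s s2 a2 b2 ->
  Brac_s (s1 + s2)
    (fun j => s1%:R / (s1 + s2)%:R * a1 j + s2%:R / (s1 + s2)%:R * a2 j)
    (fun j => s1%:R / (s1 + s2)%:R * b1 j + s2%:R / (s1 + s2)%:R * b2 j).
Proof.
move=> h1 h2 [sa1 [sb1 [A1 [B1 [HA1 [HB1 [HAB1 [TA1 TB1]]]]]]]]
             [sa2 [sb2 [A2 [B2 [HA2 [HB2 [HAB2 [TA2 TB2]]]]]]]].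
have n1 : (s1%:R : R) != 0 by rewrite pnatr_eq0 -lt0n.
have n2 : (s2%:R : R) != 0 by rewrite pnatr_eq0 -lt0n.
have n12 : ((s1 + s2)%:R : R) != 0 by rewrite pnatr_eq0 addn_eq0 negb_and -!lt0n h1.
have c1 : ((s1%:R : R[i])) != 0 by rewrite pnatr_eq0 -lt0n.
have c2 : ((s2%:R : R[i])) != 0 by rewrite pnatr_eq0 -lt0n.
have c12 : ((s1 + s2)%:R : R[i]) != 0 by rewrite pnatr_eq0 addn_eq0 negb_and -!lt0n h1.
have tsum : s1%:R / (s1 + s2)%:R + s2%:R / (s1 + s2)%:R = 1 :> R.
  by rewrite -mulrDl -natrD divff.
have t1 : 0 <= s1%:R / (s1 + s2)%:R :> R by rewrite divr_ge0 ?ler0n.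
have t2 : 0 <= s2%:R / (s1 + s2)%:R :> R by rewrite divr_ge0 ?ler0n.
split; first exact: simplex_comb.
split; first exact: simplex_comb.
exists (fun i => block_mx (A1 i) 0 0 (A2 i)), (fun i => block_mx (B1 i) 0 0 (B2 i)).
split; first by under eq_bigr do rewrite ctr_block mul_block; rewrite sum_block HA1 HA2 -scalar_mx_block.
split; first by under eq_bigr do rewrite ctr_block mul_block; rewrite sum_block HB1 HB2 -scalar_mx_block.
split; first by under eq_bigr do rewrite ctr_block mul_block; rewrite sum_block HAB1 HAB2 block_mx0.
have key : forall (x1 x2 : R) (y1 y2 : R[i]), s1%:R^-1 * y1 = x1%:C -> s2%:R^-1 * y2 = x2%:C ->
   (s1 + s2)%:R^-1 * (y1 + y2) = (s1%:R / (s1 + s2)%:R * x1 + s2%:R / (s1 + s2)%:R * x2)%:C.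
  move=> x1 x2 y1 y2 e1 e2.
  rewrite [RHS]rmorphD !(rmorphM (real_complex R)) -[X in _ * X + _]e1 -[X in _ + _ * X]e2 !(rmorphV (real_complex R)) ?unitfE //= !rmorph_nat.
  by field; rewrite c1 c2 -natrD c12.
split=> i; rewrite ctr_block mul_block mxtrace_block; exact: key.
Qed.
Lemma part1 d k (s : 'I_k.+1 -> nat) (a b : 'I_k.+1 -> 'I_d -> R) :
  (forall l, (1 <= s l)%N) -> (forall l, Brac_s (s l) (a l) (b l)) ->
  Brac_s (\sum_(l < k.+1) s l)%N
         (fun j => \sum_(l < k.+1) ((s l)%:R / (\sum_(m < k.+1) s m)%:R) * a l j)
         (fun j => \sum_(l < k.+1) ((s l)%:R / (\sum_(m < k.+1) s m)%:R) * b l j).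
Proof.
elim: k s a b => [|k IH] s a b hs hB.
  have h0 : (s ord0)%:R != 0 :> R by rewrite pnatr_eq0 -lt0n hs.
  rewrite big_ord1; apply: Brac_s_ext (hB ord0) => j; rewrite big_ord1 divff ?mul1r //.
set S' := (\sum_(l < k.+1) s (widen_ord (leqnSn _) l))%N.
have hS' : (0 < S')%N.
  by rewrite /S' big_ord_recl addn_gt0 hs.
have IH' := IH (fun l => s (widen_ord (leqnSn _) l)) (fun l => a (widen_ord (leqnSn _) l))
   (fun l => b (widen_ord (leqnSn _) l)) (fun l => hs _) (fun l => hB _).
have := two_block hS' (hs ord_max) IH' (hB ord_max).
have eS : (\sum_(l < k.+2) s l)%N = (S' + s ord_max)%N by rewrite big_ord_recr.
rewrite eS.
have nS' : (S'%:R : R) != 0 by rewrite pnatr_eq0 -lt0n.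
have ex : forall x : 'I_k.+2 -> 'I_d -> R, forall j,
  S'%:R / (S' + s ord_max)%:R *
    (\sum_(l < k.+1) (s (widen_ord (leqnSn _) l))%:R / S'%:R * x (widen_ord (leqnSn _) l) j) +
  (s ord_max)%:R / (S' + s ord_max)%:R * x ord_max j =
  \sum_(l < k.+2) (s l)%:R / (S' + s ord_max)%:R * x l j.
  move=> x j; rewrite [RHS]big_ord_recr /=; congr (_ + _).
  rewrite mulr_sumr; apply: eq_bigr => l _.
  by field; rewrite nS' /= -natrD pnatr_eq0 addn_eq0 negb_and -!lt0n hS'.
by apply: Brac_s_ext => j; apply: ex.
Qed.
Lemma cplx_eq (a b c e : R) : a = c -> b = e -> a +i* b = c +i* e.
Proof. by move=> -> ->. Qed.

Lemma triangle (L r T : R) : 0 <= L -> 0 <= r -> 0 <= T ->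
  r <= L + T -> L <= r + T -> T <= L + r ->
  exists w v : R[i], w * w^* = 1 /\ v * v^* = 1 /\ L%:C + r%:C * w + T%:C * v = 0.
Proof.
move=> hL hr hT t1 t2 t3.
pose x := if L * T == 0 then 1 else (r ^+ 2 - L ^+ 2 - T ^+ 2) / (2 * L * T).
have hx : x ^+ 2 <= 1.
  rewrite /x; case: eqP => [_|/eqP nz]; first by rewrite expr1n.
  have p : 0 < 2 * L * T.
    rewrite -mulrA mulr_gt0 // lt_def mulf_eq0 negb_or.
    by move: nz; rewrite mulf_eq0 negb_or => /andP[-> ->]; rewrite mulr_ge0.
  rewrite expr_div_n ler_pdivrMr ?exprn_gt0 // mul1r.
  have q1 : 0 <= (L + T - r) * (L + T + r) by apply: mulr_ge0; lra.
  have q2 : 0 <= (r - L + T) * (r + L - T) by apply: mulr_ge0; lra.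
  set a := r ^+ 2 - L ^+ 2 - T ^+ 2; set p0 := 2 * L * T.
  have h1 : 0 <= p0 - a by rewrite /a /p0; nra.
  have h2 : 0 <= p0 + a by rewrite /a /p0; nra.
  have := mulr_ge0 h1 h2; nra.
pose y := Num.sqrt (1 - x ^+ 2).
have hy : y ^+ 2 = 1 - x ^+ 2 by rewrite sqr_sqrtr // subr_ge0.
pose v : R[i] := x +i* y.
have yy : y * y = 1 - x * x by rewrite -!expr2 hy.
have vv : v * v^* = 1.
  rewrite /v /=; apply: cplx_eq; last by ring.
  by rewrite mulrN opprK yy; ring.
pose z : R[i] := (L + T * x) +i* (T * y).
have ez : L%:C + T%:C * v = z.
  by rewrite /z /v /=; apply: cplx_eq; ring.
have zz : z * z^* = (r ^+ 2)%:C.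
  rewrite /z /=; apply: cplx_eq; last by ring.
  have -> : (L + T * x) * (L + T * x) - T * y * - (T * y) = L ^+ 2 + 2 * L * T * x + T ^+ 2.
    rewrite mulrN opprK (_ : T * y * (T * y) = T * T * (y * y)); last by ring.
    by rewrite yy; ring.
  rewrite /x; case: eqP => [e|/eqP nz].
    move/eqP: e; rewrite mulf_eq0 => /orP[/eqP e|/eqP e]; rewrite e in t1 t2 t3 *.
      have -> : r = T by apply/le_anti/andP; split; lra.
      ring.
    have -> : r = L by apply/le_anti/andP; split; lra.
    ring.
  field; move: nz; rewrite mulf_eq0 negb_or => /andP[-> ->] //.
have [r0|rn0] := eqVneq r 0.
  exists 1, v; split; first by rewrite mul1r; apply: cplx_eq; rewrite /= ?oppr0.
  split=> //.
  have : z * z^* = 0 by rewrite zz r0 expr0n.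
  rewrite -sqr_normc => /eqP; rewrite sqrf_eq0 normr_eq0 => /eqP z0.
  by rewrite addrAC ez z0 r0 mul0r addr0.
exists (- (z * (r^-1)%:C)), v; split; last split=> //.
  rewrite rmorphN mulrNN rmorphM /= [X in _ * (_ * X)](_ : _ = (r^-1)%:C); last by apply: cplx_eq; rewrite ?oppr0.
  rewrite mulrACA zz.
  rewrite -(rmorphM (real_complex R)) -(rmorphM (real_complex R)) (_ : r ^+ 2 * (r^-1 / r) = 1) ?rmorph1 //.
  by field.
rewrite addrAC ez mulrN mulrCA -(rmorphM (real_complex R)) divff // mulr1 subrr //.
Qed.
Lemma polygon n (r : 'I_n -> R) : (forall i, 0 <= r i) ->
  (forall i, r i <= \sum_(j < n | j != i) r j) ->
  exists u : 'I_n -> R[i], (forall i, u i * (u i)^* = 1) /\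
     \sum_(i < n) (r i)%:C * u i = 0.
Proof.
case: n r => [|n'] r hr hp.
  by exists (fun _ => 1); split=> [[]//|]; rewrite big_ord0.
pose S := \sum_(i < n'.+1) r i.
pose P m := \sum_(i < n'.+1 | (i < m)%N) r i.
have S0 : 0 <= S by apply: sumr_ge0.
have Qn : S <= 2 * P n'.+1.
  rewrite /P (eq_bigl xpredT) ?ler_peMl //; last by move=> i; rewrite ltn_ord.
  by rewrite ler1n.
have exm : exists m, S <= 2 * P m.+1 by exists n'.
case: (ex_minnP exm) => j Qj minj.
have hj : (j < n'.+1)%N by rewrite ltnS minj.
pose j0 := Ordinal hj.
have PjS : 2 * P j <= S.
  case: j Qj minj hj j0 => [|j'] Qj minj hj j0.
    by rewrite /P big_pred0 ?mulr0 // => i.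
  rewrite leNgt; apply/negP => /ltW /minj; by rewrite ltnn.
pose L := P j.
pose Rt := \sum_(i < n'.+1 | (j < i)%N) r i.
have F2 : P j.+1 = L + r j0.
  rewrite /P (bigD1 j0) //= addrC; congr (_ + _); apply: eq_bigl => i.
  by rewrite -val_eqE /=; apply/idP/idP; lia.
have F3 : \sum_(i < n'.+1 | i != j0) r i = L + Rt.
  rewrite (bigID (fun i : 'I_n'.+1 => (i < j)%N)) /=; congr (_ + _); apply: eq_bigl => i;
  by rewrite -val_eqE /=; apply/idP/idP; lia.
have F1 : S = L + r j0 + Rt by rewrite /S (bigD1 j0) //= F3; ring.
have [w [v [ww [vv e]]]] : exists w v : R[i], w * w^* = 1 /\ v * v^* = 1 /\
    L%:C + (r j0)%:C * w + Rt%:C * v = 0.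
  apply: triangle.
  - by apply: sumr_ge0 => i _.
  - by [].
  - by apply: sumr_ge0 => i _.
  - by rewrite -F3.
  - move: PjS; rewrite F1 -/L; lra.
  - move: Qj; rewrite F1 F2; lra.
exists (fun i => if (i < j)%N then 1 else if i == j0 then w else v); split.
  move=> i; case: ifP => _; first by rewrite mul1r; apply: cplx_eq; rewrite /= ?oppr0.
  by case: ifP.
rewrite (bigD1 j0) //= ltnn eqxx.
rewrite (bigID (fun i : 'I_n'.+1 => (i < j)%N)) /=.
have eA : \sum_(i < n'.+1 | (i != j0) && (i < j)%N)
    (r i)%:C * (if (i < j)%N then 1 else if i == j0 then w else v) = L%:C.
  rewrite /L /P rmorph_sum; apply: eq_big => i.
    by rewrite -val_eqE /=; apply/idP/idP; lia.
  by move=> /andP[_ ->]; rewrite mulr1.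
have eB : \sum_(i < n'.+1 | (i != j0) && ~~ (i < j)%N)
    (r i)%:C * (if (i < j)%N then 1 else if i == j0 then w else v) = Rt%:C * v.
  rewrite /Rt rmorph_sum mulr_suml; apply: eq_big => i.
    by rewrite -val_eqE /=; apply/idP/idP; lia.
  by move=> /andP[/negbTE -> /negbTE ->].
rewrite eA eB -e; ring.
Qed.
Lemma conjR (t : R) : conjc (t%:C) = t%:C.
Proof. by apply: cplx_eq; rewrite ?oppr0. Qed.

Lemma conjM (x y : R[i]) : conjc (x * y) = conjc x * conjc y.
Proof. by case: x => [x1 x2]; case: y => [y1 y2]; apply: cplx_eq => /=; ring. Qed.

Lemma tr11 (X Y : 'M[R[i]]_1) : \tr (X *m ctr Y) = X 0 0 * conjc (Y 0 0).
Proof. by rewrite /mxtrace big_ord1 !mxE big_ord1 !mxE. Qed.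

Lemma ctr_scalar n (c : R[i]) : ctr (c%:M : 'M_n) = (conjc c)%:M.
Proof. by rewrite /ctr map_scalar_mx tr_scalar_mx. Qed.

Lemma inv1C : ((1%N)%:R : R[i])^-1 = 1.
Proof. by rewrite invr1. Qed.

Lemma part2b d (a b : 'I_d -> R) : Brac a b -> Brac_s 1 a b.
Proof.
move=> [sa [sb hp]]; split=> //; split=> //.
have [u [uu su]] := polygon (fun i => sqrtr_ge0 (a i * b i)) hp.
have ha : forall i, 0 <= a i by case: sa.
have hb : forall i, 0 <= b i by case: sb.
exists (fun i => ((Num.sqrt (a i))%:C)%:M), (fun i => ((Num.sqrt (b i))%:C * conjc (u i))%:M).
have AA : forall i, ((Num.sqrt (a i))%:C)%:M *m ctr (((Num.sqrt (a i))%:C)%:M : 'M_1) = ((a i)%:C)%:M.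
  move=> i; rewrite ctr_scalar -scalar_mxM conjR -(rmorphM (real_complex R)).
  by rewrite -expr2 sqr_sqrtr.
have BB : forall i, ((Num.sqrt (b i))%:C * conjc (u i))%:M *m
     ctr (((Num.sqrt (b i))%:C * conjc (u i))%:M : 'M_1) = ((b i)%:C)%:M.
  move=> i; rewrite ctr_scalar -scalar_mxM conjM conjR conjcK.
  rewrite mulrACA [conjc (u i) * _]mulrC uu mulr1 -(rmorphM (real_complex R)).
  by rewrite -expr2 sqr_sqrtr.
have AB : forall i, ((Num.sqrt (a i))%:C)%:M *m
     ctr (((Num.sqrt (b i))%:C * conjc (u i))%:M : 'M_1) = ((Num.sqrt (a i * b i))%:C * u i)%:M.
  move=> i; rewrite ctr_scalar -scalar_mxM conjM conjR conjcK mulrA.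
  by rewrite -(rmorphM (real_complex R)) sqrtrM.
split.
  under eq_bigr do rewrite AA.
  by rewrite -raddf_sum -rmorph_sum /=; case: sa => _ ->.
split.
  under eq_bigr do rewrite BB.
  by rewrite -raddf_sum -rmorph_sum /=; case: sb => _ ->.
split.
  under eq_bigr do rewrite AB.
  by rewrite -raddf_sum /= su raddf0.
split=> i; rewrite ?AA ?BB mxtrace_scalar inv1C mul1r //.
Qed.
Lemma part2a d (a b : 'I_d -> R) : Brac_s 1 a b -> Brac a b.
Proof.
move=> [sa [sb [A [B [_ [_ [HAB [TA TB]]]]]]]].
split=> //; split=> //.
have ha : forall i, 0 <= a i by case: sa.
have hb : forall i, 0 <= b i by case: sb.
pose z i := A i 0 0 * conjc (B i 0 0).
have sz : \sum_(i < d) z i = 0.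
  have := congr1 (fun M : 'M_1 => M 0 0) HAB; rewrite /= summxE mxE /= => e; rewrite -[RHS]e.
  by apply: eq_bigr => i _; rewrite /z -tr11 /mxtrace big_ord1.
have nz : forall i, (Num.sqrt (a i * b i))%:C = `|z i|.
  move=> i; apply/eqP; rewrite -(@eqrXn2 _ 2) //; last by rewrite ler0c sqrtr_ge0.
  rewrite -(rmorphXn (real_complex R)) sqr_sqrtr ?mulr_ge0 //.
  rewrite /z normrM normcJ exprMn !sqr_normc (rmorphM (real_complex R)).
  by have := TA i; have := TB i; rewrite !tr11 inv1C !mul1r => -> ->.
move=> i; rewrite -lecR nz rmorph_sum /=.
under eq_bigr do rewrite nz.
apply: le_trans (ler_norm_sum _ _ _).
have : z i + \sum_(j < d | j != i) z j = 0.
  by rewrite -[RHS]sz [RHS](bigD1 i).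
by move/eqP; rewrite addr_eq0 => /eqP ->; rewrite normrN.
Qed.
End S.
Unset Implicit Arguments. Set Strict Implicit.

Theorem corollary3p6 (R : realType) (d : nat) (hd : (2 <= d)%N) :
  (forall (k : nat) (s : 'I_k -> nat), (0 < k)%N -> (forall l, (1 <= s l)%N) ->
     forall a b : 'I_k -> 'I_d -> R,
       (forall l, Brac_s (s l) (a l) (b l)) ->
       Brac_s (\sum_(l < k) s l)%N
         (fun j => \sum_(l < k) ((s l)%:R / (\sum_(m < k) s m)%:R) * a l j)
         (fun j => \sum_(l < k) ((s l)%:R / (\sum_(m < k) s m)%:R) * b l j))
  /\ (forall a b : 'I_d -> R, Brac_s 1 a b <-> Brac a b)
  /\ (forall (s : nat), (1 <= s)%N -> forall a b : 'I_d -> R, Brac a b -> Brac_s s a b).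
Proof.
split.
  case=> [|k] s hk; first by rewrite ltnn in hk.
  move=> hs a b hB; exact: part1.
split.
  by move=> a b; split; [apply: part2a | apply: part2b].
case=> [|s'] hs a b hab; first by rewrite ltnn in hs.
have := @part1 R d s' (fun _ => 1%N) (fun _ => a) (fun _ => b) (fun _ => leqnn 1)
   (fun _ => part2b hab).
have e : (\sum_(l < s'.+1) 1)%N = s'.+1 by rewrite sum1_card card_ord.
rewrite e; apply: Brac_s_ext => j; rewrite sumr_const card_ord -mulr_natl;
  by field; rewrite paddr_eq0 ?ler0n // oner_eq0.
Qed.
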